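(* Let $\rho_{ABC}$ be a three-qubit state that is symmetric, i.e. invariant under every permutation of the three qubits. Then none of its three two-qubit reduced states violates the three-settings CJWR linear steering inequality, i.e. $S_{AB}\le 1$, $S_{AC}\le 1$ and $S_{BC}\le 1$.
   Context: For a two-qubit state $\rho$ let $t_{kl}=\mathrm{Tr}[\rho\,\sigma_k\otimes\sigma_l]$ ($k,l\in\{1,2,3\}$, $\sigma_k$ Pauli matrices) and $S(\rho)=\sum_{k,l}t_{kl}^2$. For a three-qubit state, $\rho_{AB},\rho_{AC},\rho_{BC}$ are its two-qubit reduced states and $S_{ij}=S(\rho_{ij})$. The three-settings CJWR linear steering inequality $\frac{1}{\sqrt3}|\sum_{k=1}^3\langle A_k\otimes B_k\rangle|\le1$ (with $A_k=\hat a_k\cdot\vec\sigma$, $\hat a_k$ unit vectors, $B_k=\hat b_k\cdot\vec\sigma$, $\hat b_k$ orthonormal) has maximal left-hand side $\sqrt{S(\rho)}$ over all settings, so it is violated by $\rho$ iff $S(\rho)>1$. *)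

(* Defs.v *)
From HB Require Import structures.
From mathcomp Require Import all_boot all_order all_algebra all_fingroup.
From mathcomp.real_closed Require Import complex mxtens.
Set Implicit Arguments. Unset Strict Implicit. Unset Printing Implicit Defensive.
Import Order.TTheory GRing.Theory Num.Theory.
Local Open Scope ring_scope.

Section Qubits.
Variable R : rcfType.
Local Notation C := (R[i]).

Definition adjmx m n (A : 'M[C]_(m, n)) : 'M[C]_(n, m) := (map_mx Num.conj A)^T.

Definition is_state n (rho : 'M[C]_n) : Prop :=
  [/\ adjmx rho = rho,
      forall v : 'cV[C]_n, 0 <= (adjmx v *m rho *m v) 0 0
    & \tr rho = 1].

Definition sigma1 : 'M[C]_2 := \matrix_(i, j) (if i == j then 0 else 1).
Definition sigma2 : 'M[C]_2 :=
  \matrix_(i, j) (if i == j then 0 else if i == 0 then - 'i else 'i).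
Definition sigma3 : 'M[C]_2 :=
  \matrix_(i, j) (if i == j then (if i == 0 then 1 else -1) else 0).
Definition paulis : seq 'M[C]_2 := [:: sigma1; sigma2; sigma3].

Definition tcoef (rho : 'M[C]_(2 * 2)) (sk sl : 'M[C]_2) : C :=
  \tr (rho *m (sk *t sl)).
Definition Sval (rho : 'M[C]_(2 * 2)) : C :=
  \sum_(sk <- paulis) \sum_(sl <- paulis) (tcoef rho sk sl) ^+ 2.

(* three-qubit computational basis index |a b c>, space C^2 (x) C^2 (x) C^2 *)
Definition idx2 (a b : 'I_2) : 'I_(2 * 2) := mxtens_index (a, b).
Definition idx3 (a b c : 'I_2) : 'I_(2 * 2 * 2) := mxtens_index (idx2 a b, c).
Definition qA (x : 'I_(2 * 2 * 2)) : 'I_2 := (mxtens_unindex (mxtens_unindex x).1).1.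
Definition qB (x : 'I_(2 * 2 * 2)) : 'I_2 := (mxtens_unindex (mxtens_unindex x).1).2.
Definition qC (x : 'I_(2 * 2 * 2)) : 'I_2 := (mxtens_unindex x).2.
Definition qbit (x : 'I_(2 * 2 * 2)) (q : 'I_3) : 'I_2 :=
  if val q == 0%N then qA x else if val q == 1%N then qB x else qC x.

Definition perm_idx (s : 'S_3) (x : 'I_(2 * 2 * 2)) : 'I_(2 * 2 * 2) :=
  idx3 (qbit x (s 0)) (qbit x (s 1)) (qbit x (s 2)).

(* invariance under every permutation of the three qubits: P_s rho P_s^dag = rho *)
Definition symmetric3 (rho : 'M[C]_(2 * 2 * 2)) : Prop :=
  forall (s : 'S_3) (x y : 'I_(2 * 2 * 2)), rho (perm_idx s x) (perm_idx s y) = rho x y.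

Definition rhoAB (rho : 'M[C]_(2 * 2 * 2)) : 'M[C]_(2 * 2) :=
  \matrix_(i, j) \sum_(c < 2)
     rho (idx3 (mxtens_unindex i).1 (mxtens_unindex i).2 c)
         (idx3 (mxtens_unindex j).1 (mxtens_unindex j).2 c).
Definition rhoAC (rho : 'M[C]_(2 * 2 * 2)) : 'M[C]_(2 * 2) :=
  \matrix_(i, j) \sum_(b < 2)
     rho (idx3 (mxtens_unindex i).1 b (mxtens_unindex i).2)
         (idx3 (mxtens_unindex j).1 b (mxtens_unindex j).2).
Definition rhoBC (rho : 'M[C]_(2 * 2 * 2)) : 'M[C]_(2 * 2) :=
  \matrix_(i, j) \sum_(a < 2)
     rho (idx3 a (mxtens_unindex i).1 (mxtens_unindex i).2)
         (idx3 a (mxtens_unindex j).1 (mxtens_unindex j).2).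

End Qubits.

(* Main.v *)
Require Import Defs.
From HB Require Import structures.
From mathcomp Require Import all_boot all_order all_algebra all_fingroup.
From mathcomp.real_closed Require Import complex mxtens.
From mathcomp Require Import ring.
Set Implicit Arguments. Unset Strict Implicit. Unset Printing Implicit Defensive.
Import Order.TTheory GRing.Theory Num.Theory.
Local Open Scope ring_scope.

Section Key.
Variable R : rcfType.
Local Notation C := (R[i]).

Lemma adjE m n (A : 'M[C]_(m, n)) : adjmx A = map_mx Num.conj (A ^T).
Proof. by rewrite /adjmx map_trmx. Qed.

Lemma key n (rho J : 'M[C]_n) :
  adjmx rho = rho -> (forall v : 'cV[C]_n, 0 <= (adjmx v *m rho *m v) 0 0) ->
  J *m J^T = 1%:M -> J^T = - J -> map_mx Num.conj J = J ->
  \tr (rho *m rho) + \tr (rho *m J *m rho^T *m J^T) <= (\tr rho) ^+ 2.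
Proof.
move=> herm psd JJ Jasym Jreal.
have hermT : map_mx Num.conj (rho ^T) = rho by rewrite -adjE.
have normal : rho \is normalmx.
  by apply/normalmxP; rewrite hermT.
have Pu := spectral_unitarymx rho.
have rhoE := orthomx_spectralP normal.
set P := spectralmx rho in Pu rhoE.
set d := spectral_diag rho in rhoE.
rewrite invmx_unitary // in rhoE.
have PP : P *m map_mx Num.conj (P ^T) = 1%:M by apply/unitarymxP.
have PP' : map_mx Num.conj (P ^T) *m P = 1%:M by apply: mulmx1C.
set D := diag_mx d in rhoE.
have d_ge0 : forall k, 0 <= d 0 k.
  move=> k; have := psd (map_mx Num.conj (P ^T) *m (delta_mx k 0 : 'cV[C]_n)).
  have -> : adjmx (map_mx Num.conj (P ^T) *m (delta_mx k 0 : 'cV[C]_n)) = (delta_mx 0 k : 'rV[C]_n) *m P.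
    apply/matrixP => i j; rewrite !mxE rmorph_sum; apply: eq_bigr => l _.
    by rewrite !mxE rmorphM /= conjCK rmorph_nat mulrC andbC.
  rewrite rhoE !mulmxA -(mulmxA _ P) PP mulmx1 -(mulmxA _ P) PP mulmx1.
  by rewrite -rowE -colE !mxE eqxx mulr1n.
set Pc := map_mx Num.conj (P ^T) in PP PP' rhoE.
have trE : \tr rho = \sum_k d 0 k.
  by rewrite rhoE mxtrace_mulC mulmxA PP mul1mx mxtrace_diag.
have tr2E : \tr (rho *m rho) = \sum_k d 0 k ^+ 2.
  rewrite rhoE !mulmxA -(mulmxA _ P Pc) PP mulmx1 mxtrace_mulC !mulmxA PP mul1mx.
  by rewrite /mxtrace; apply: eq_bigr => k _; rewrite mul_diag_mx !mxE eqxx mulr1n expr2.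
set H := P *m J *m P^T.
set Hc := map_mx Num.conj (H^T).
have PcT : Pc^T = map_mx Num.conj P by rewrite /Pc map_trmx trmxK.
have HcE : Hc = map_mx Num.conj P *m J^T *m Pc.
  by rewrite /Hc /H !trmx_mul trmxK !map_mxM -[map_mx _ (J^T)]map_trmx Jreal !mulmxA.
have XE : \tr (rho *m J *m rho^T *m J^T) = \tr (D *m H *m D *m Hc).
  have -> : rho *m J *m rho^T *m J^T = Pc *m (D *m H *m D *m Hc) *m P.
    rewrite HcE /H rhoE !trmx_mul PcT tr_diag_mx !mulmxA.
    by rewrite -(mulmxA _ Pc P) PP' mulmx1.
  by rewrite mxtrace_mulC mulmxA PP mul1mx.
have HH : H *m Hc = 1%:M.
  have PTPc : P^T *m map_mx Num.conj P = 1%:M.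
    have := congr1 (map_mx Num.conj) PP'.
    rewrite map_mxM map_mx1; suff -> : map_mx Num.conj Pc = P^T by [].
    by apply/matrixP => i j; rewrite !mxE conjCK.
  rewrite HcE /H !mulmxA -(mulmxA _ (P^T)) PTPc mulmx1 -(mulmxA _ J) JJ mulmx1.
  exact: PP.
have Hdiag : forall k, H k k = 0.
  move=> k; have : H^T = - H by rewrite /H !trmx_mul trmxK Jasym mulNmx mulmxN mulmxA.
  move/matrixP/(_ k k); rewrite !mxE => /eqP; rewrite -subr_eq0 opprK -mulr2n.
  by rewrite mulrn_eq0 /= => /eqP.
have rown : forall k, \sum_l H k l * (H k l)^* = 1.
  move=> k; have := congr1 (fun M : 'M[C]_n => M k k) HH; rewrite /= !mxE eqxx mulr1n => <-.
  by apply: eq_bigr => l _; rewrite !mxE.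
have hle1 : forall k l, H k l * (H k l)^* <= 1.
  move=> k l; rewrite -(rown k) (bigD1 l) //= lerDl.
  by apply: sumr_ge0 => m _; exact: mul_conjC_ge0.
rewrite XE tr2E trE expr2 mulr_suml.
have -> : \tr (D *m H *m D *m Hc) = \sum_k \sum_l d 0 k * d 0 l * (H k l * (H k l)^*).
  rewrite /mxtrace; apply: eq_bigr => k _; rewrite mxE; apply: eq_bigr => l _.
  rewrite mul_mx_diag mxE mul_diag_mx !mxE; ring.
rewrite -big_split /=; apply: ler_sum => k _.
rewrite mulr_sumr [\sum_(l < n) d 0 k * d 0 l](bigD1 k) //= [\sum_(l < n) _ * _ * _](bigD1 k) //= Hdiag mul0r mulr0 add0r.
rewrite -expr2 lerD2l; apply: ler_sum => l _.
by rewrite -[X in _ <= X]mulr1; apply: ler_wpM2l; [apply: mulr_ge0 | apply: hle1].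
Qed.
End Key.

Section Ident.
Variable R : rcfType.
Local Notation C := (R[i]).

Definition o0 : 'I_2 := @Ordinal 2 0 isT.
Definition o1 : 'I_2 := @Ordinal 2 1 isT.

Lemma sum2 (F : 'I_2 -> C) : \sum_(i < 2) F i = F o0 + F o1.
Proof. by rewrite big_ord_recl big_ord1; congr (F _ + F _); apply: val_inj. Qed.

Lemma sum_tens m n (F : 'I_(m * n) -> C) :
  \sum_(i < m * n) F i = \sum_(a < m) \sum_(b < n) F (mxtens_index (a, b)).
Proof.
rewrite pair_big /= (reindex (@mxtens_index m n)) /=.
  by apply: eq_bigr => -[a b].
by exists (@mxtens_unindex m n) => x _; [exact: mxtens_indexK | exact: mxtens_unindexK].
Qed.

Lemma sum4 (F : 'I_(2 * 2) -> C) : \sum_(i < 2 * 2) F i =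
  F (idx2 o0 o0) + F (idx2 o0 o1) + F (idx2 o1 o0) + F (idx2 o1 o1).
Proof. by rewrite sum_tens !sum2 addrA. Qed.

Lemma sum8 (F : 'I_(2 * 2 * 2) -> C) : \sum_(i < 2 * 2 * 2) F i =
  F (idx3 o0 o0 o0) + F (idx3 o0 o0 o1) + F (idx3 o0 o1 o0) + F (idx3 o0 o1 o1) +
  F (idx3 o1 o0 o0) + F (idx3 o1 o0 o1) + F (idx3 o1 o1 o0) + F (idx3 o1 o1 o1).
Proof. rewrite sum_tens sum4 !sum2 /idx3; rewrite !addrA; done. Qed.

Lemma trmulE n (A B : 'M[C]_n) : \tr (A *m B) = \sum_i \sum_j A i j * B j i.
Proof. by apply: eq_bigr => i _; rewrite mxE. Qed.

Lemma tensE (X Y : 'M[C]_2) a b c d :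
  (X *t Y) (idx2 a b) (idx2 c d) = X a c * Y b d.
Proof. exact: tensmxE. Qed.

Lemma idx3E a b c : idx3 a b c = mxtens_index (idx2 a b, c). Proof. by []. Qed.

Definition A2 : 'M[C]_2 := \matrix_(i, j) (if i == j then 0 else if i == 0 then -1 else 1).
Definition J3 : 'M[C]_(2 * 2 * 2) := A2 *t A2 *t A2.

Lemma J3E a b c a' b' c' : J3 (idx3 a b c) (idx3 a' b' c') = A2 a a' * A2 b b' * A2 c c'.
Proof. by rewrite /J3 !idx3E tensmxE tensE. Qed.

Lemma sigma2E : sigma2 R = 'i *: A2.
Proof.
apply/matrixP => i j; rewrite !mxE.
by case: ifP => _; [rewrite mulr0 | case: ifP => _; rewrite ?mulrN1 ?mulr1].
Qed.

Lemma tensZl (c : C) (X Y : 'M[C]_2) : (c *: X) *t Y = c *: (X *t Y).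
Proof. by apply/matrixP => i j; rewrite !mxE mulrA. Qed.
Lemma tensZr (c : C) (X Y : 'M[C]_2) : X *t (c *: Y) = c *: (X *t Y).
Proof. by apply/matrixP => i j; rewrite !mxE mulrCA. Qed.

Lemma tcoefZl rho (c : C) X Y : tcoef rho (c *: X) Y = c * tcoef rho X Y.
Proof. by rewrite /tcoef tensZl -scalemxAr mxtraceZ. Qed.
Lemma tcoefZr rho (c : C) X Y : tcoef rho X (c *: Y) = c * tcoef rho X Y.
Proof. by rewrite /tcoef tensZr -scalemxAr mxtraceZ. Qed.

Lemma sqri (x : C) : ('i * x) ^+ 2 = - x ^+ 2.
Proof. by rewrite exprMn sqrCi mulN1r. Qed.
Lemma sqrii (x : C) : ('i * ('i * x)) ^+ 2 = x ^+ 2.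
Proof. by rewrite sqri sqri opprK. Qed.

Lemma SvalE_gen (t : 'M[C]_2 -> 'M[C]_2 -> C)
  (hl : forall c X Y, t (c *: X) Y = c * t X Y)
  (hr : forall c X Y, t X (c *: Y) = c * t X Y) :
  \sum_(sk <- paulis R) \sum_(sl <- paulis R) t sk sl ^+ 2 =
  let s1 := sigma1 R in let s3 := sigma3 R in
  t s1 s1 ^+ 2 - t s1 A2 ^+ 2 + t s1 s3 ^+ 2
  - t A2 s1 ^+ 2 + t A2 A2 ^+ 2 - t A2 s3 ^+ 2
  + t s3 s1 ^+ 2 - t s3 A2 ^+ 2 + t s3 s3 ^+ 2.
Proof.
rewrite /paulis 12!big_cons 4!big_nil.
rewrite sigma2E.
rewrite !hl !hr.
rewrite sqrii 4!sqri /=.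
ring.
Qed.

Lemma SvalE rho : Sval rho =
  let s1 := sigma1 R in let s3 := sigma3 R in let t := tcoef rho in
  t s1 s1 ^+ 2 - t s1 A2 ^+ 2 + t s1 s3 ^+ 2
  - t A2 s1 ^+ 2 + t A2 A2 ^+ 2 - t A2 s3 ^+ 2
  + t s3 s1 ^+ 2 - t s3 A2 ^+ 2 + t s3 s3 ^+ 2.
Proof. exact: (SvalE_gen (@tcoefZl rho) (@tcoefZr rho)). Qed.


Lemma s1_00 : sigma1 R o0 o0 = 0. Proof. by rewrite mxE. Qed.
Lemma s1_01 : sigma1 R o0 o1 = 1. Proof. by rewrite mxE. Qed.
Lemma s1_10 : sigma1 R o1 o0 = 1. Proof. by rewrite mxE. Qed.
Lemma s1_11 : sigma1 R o1 o1 = 0. Proof. by rewrite mxE. Qed.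
Lemma s3_00 : sigma3 R o0 o0 = 1. Proof. by rewrite mxE. Qed.
Lemma s3_01 : sigma3 R o0 o1 = 0. Proof. by rewrite mxE. Qed.
Lemma s3_10 : sigma3 R o1 o0 = 0. Proof. by rewrite mxE. Qed.
Lemma s3_11 : sigma3 R o1 o1 = -1. Proof. by rewrite mxE. Qed.
Lemma A2_00 : A2 o0 o0 = 0. Proof. by rewrite mxE. Qed.
Lemma A2_01 : A2 o0 o1 = -1. Proof. by rewrite mxE. Qed.
Lemma A2_10 : A2 o1 o0 = 1. Proof. by rewrite mxE. Qed.
Lemma A2_11 : A2 o1 o1 = 0. Proof. by rewrite mxE. Qed.

Lemma tcoef_expand (M : 'M[C]_(2 * 2)) X Y : tcoef M X Y =
  \sum_(i < 2 * 2) \sum_(j < 2 * 2) M i j * (X *t Y) j i.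
Proof. by rewrite /tcoef trmulE. Qed.

Lemma rhoAB_E (rho : 'M[C]_(2 * 2 * 2)) a b c d : rhoAB rho (idx2 a b) (idx2 c d) =
  rho (idx3 a b o0) (idx3 c d o0) + rho (idx3 a b o1) (idx3 c d o1).
Proof. by rewrite mxE /idx2 !mxtens_indexK sum2. Qed.
Lemma rhoAC_E (rho : 'M[C]_(2 * 2 * 2)) a b c d : rhoAC rho (idx2 a b) (idx2 c d) =
  rho (idx3 a o0 b) (idx3 c o0 d) + rho (idx3 a o1 b) (idx3 c o1 d).
Proof. by rewrite mxE /idx2 !mxtens_indexK sum2. Qed.
Lemma rhoBC_E (rho : 'M[C]_(2 * 2 * 2)) a b c d : rhoBC rho (idx2 a b) (idx2 c d) =
  rho (idx3 o0 a b) (idx3 o0 c d) + rho (idx3 o1 a b) (idx3 o1 c d).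
Proof. by rewrite mxE /idx2 !mxtens_indexK sum2. Qed.

Lemma trJE (M : 'M[C]_(2 * 2 * 2)) : \tr (M *m J3 *m M^T *m J3^T) =
  \sum_x \sum_y (\sum_z M x z * J3 z y) * (\sum_w J3 x w * M w y).
Proof.
rewrite -mulmxA trmulE; apply: eq_bigr => x _; apply: eq_bigr => y _.
rewrite !mxE; congr (_ * _); apply: eq_bigr => w _; rewrite !mxE mulrC //.
Qed.

Lemma trE8 (M : 'M[C]_(2 * 2 * 2)) : \tr M = \sum_x M x x.
Proof. by []. Qed.

Lemma trJE2 (M : 'M[C]_(2 * 2 * 2)) : \tr (M *m J3 *m M^T *m J3^T) =
  \sum_x \sum_y (M *m J3) x y * (J3 *m M) x y.
Proof.
rewrite -mulmxA -trmx_mul trmulE; apply: eq_bigr => x _; apply: eq_bigr => y _.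
by rewrite [X in _ * X = _]mxE.
Qed.

Lemma tcoef16 (M : 'M[C]_(2 * 2)) (X Y : 'M[C]_2) : tcoef M X Y =
  M (idx2 o0 o0) (idx2 o0 o0) * (X o0 o0 * Y o0 o0)
  + M (idx2 o0 o0) (idx2 o0 o1) * (X o0 o0 * Y o1 o0)
  + M (idx2 o0 o0) (idx2 o1 o0) * (X o1 o0 * Y o0 o0)
  + M (idx2 o0 o0) (idx2 o1 o1) * (X o1 o0 * Y o1 o0)
  + M (idx2 o0 o1) (idx2 o0 o0) * (X o0 o0 * Y o0 o1)
  + M (idx2 o0 o1) (idx2 o0 o1) * (X o0 o0 * Y o1 o1)
  + M (idx2 o0 o1) (idx2 o1 o0) * (X o1 o0 * Y o0 o1)
  + M (idx2 o0 o1) (idx2 o1 o1) * (X o1 o0 * Y o1 o1)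
  + M (idx2 o1 o0) (idx2 o0 o0) * (X o0 o1 * Y o0 o0)
  + M (idx2 o1 o0) (idx2 o0 o1) * (X o0 o1 * Y o1 o0)
  + M (idx2 o1 o0) (idx2 o1 o0) * (X o1 o1 * Y o0 o0)
  + M (idx2 o1 o0) (idx2 o1 o1) * (X o1 o1 * Y o1 o0)
  + M (idx2 o1 o1) (idx2 o0 o0) * (X o0 o1 * Y o0 o1)
  + M (idx2 o1 o1) (idx2 o0 o1) * (X o0 o1 * Y o1 o1)
  + M (idx2 o1 o1) (idx2 o1 o0) * (X o1 o1 * Y o0 o1)
  + M (idx2 o1 o1) (idx2 o1 o1) * (X o1 o1 * Y o1 o1).
Proof. rewrite tcoef_expand sum4 !sum4 !tensE. ring. Qed.

Lemma trsq (M : 'M[C]_(2 * 2 * 2)) : \tr (M *m M) =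
  M (idx3 o0 o0 o0) (idx3 o0 o0 o0) * M (idx3 o0 o0 o0) (idx3 o0 o0 o0)
  + M (idx3 o0 o0 o0) (idx3 o0 o0 o1) * M (idx3 o0 o0 o1) (idx3 o0 o0 o0)
  + M (idx3 o0 o0 o0) (idx3 o0 o1 o0) * M (idx3 o0 o1 o0) (idx3 o0 o0 o0)
  + M (idx3 o0 o0 o0) (idx3 o0 o1 o1) * M (idx3 o0 o1 o1) (idx3 o0 o0 o0)
  + M (idx3 o0 o0 o0) (idx3 o1 o0 o0) * M (idx3 o1 o0 o0) (idx3 o0 o0 o0)
  + M (idx3 o0 o0 o0) (idx3 o1 o0 o1) * M (idx3 o1 o0 o1) (idx3 o0 o0 o0)
  + M (idx3 o0 o0 o0) (idx3 o1 o1 o0) * M (idx3 o1 o1 o0) (idx3 o0 o0 o0)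
  + M (idx3 o0 o0 o0) (idx3 o1 o1 o1) * M (idx3 o1 o1 o1) (idx3 o0 o0 o0)
  + M (idx3 o0 o0 o1) (idx3 o0 o0 o0) * M (idx3 o0 o0 o0) (idx3 o0 o0 o1)
  + M (idx3 o0 o0 o1) (idx3 o0 o0 o1) * M (idx3 o0 o0 o1) (idx3 o0 o0 o1)
  + M (idx3 o0 o0 o1) (idx3 o0 o1 o0) * M (idx3 o0 o1 o0) (idx3 o0 o0 o1)
  + M (idx3 o0 o0 o1) (idx3 o0 o1 o1) * M (idx3 o0 o1 o1) (idx3 o0 o0 o1)
  + M (idx3 o0 o0 o1) (idx3 o1 o0 o0) * M (idx3 o1 o0 o0) (idx3 o0 o0 o1)
  + M (idx3 o0 o0 o1) (idx3 o1 o0 o1) * M (idx3 o1 o0 o1) (idx3 o0 o0 o1)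
  + M (idx3 o0 o0 o1) (idx3 o1 o1 o0) * M (idx3 o1 o1 o0) (idx3 o0 o0 o1)
  + M (idx3 o0 o0 o1) (idx3 o1 o1 o1) * M (idx3 o1 o1 o1) (idx3 o0 o0 o1)
  + M (idx3 o0 o1 o0) (idx3 o0 o0 o0) * M (idx3 o0 o0 o0) (idx3 o0 o1 o0)
  + M (idx3 o0 o1 o0) (idx3 o0 o0 o1) * M (idx3 o0 o0 o1) (idx3 o0 o1 o0)
  + M (idx3 o0 o1 o0) (idx3 o0 o1 o0) * M (idx3 o0 o1 o0) (idx3 o0 o1 o0)
  + M (idx3 o0 o1 o0) (idx3 o0 o1 o1) * M (idx3 o0 o1 o1) (idx3 o0 o1 o0)
  + M (idx3 o0 o1 o0) (idx3 o1 o0 o0) * M (idx3 o1 o0 o0) (idx3 o0 o1 o0)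
  + M (idx3 o0 o1 o0) (idx3 o1 o0 o1) * M (idx3 o1 o0 o1) (idx3 o0 o1 o0)
  + M (idx3 o0 o1 o0) (idx3 o1 o1 o0) * M (idx3 o1 o1 o0) (idx3 o0 o1 o0)
  + M (idx3 o0 o1 o0) (idx3 o1 o1 o1) * M (idx3 o1 o1 o1) (idx3 o0 o1 o0)
  + M (idx3 o0 o1 o1) (idx3 o0 o0 o0) * M (idx3 o0 o0 o0) (idx3 o0 o1 o1)
  + M (idx3 o0 o1 o1) (idx3 o0 o0 o1) * M (idx3 o0 o0 o1) (idx3 o0 o1 o1)
  + M (idx3 o0 o1 o1) (idx3 o0 o1 o0) * M (idx3 o0 o1 o0) (idx3 o0 o1 o1)
  + M (idx3 o0 o1 o1) (idx3 o0 o1 o1) * M (idx3 o0 o1 o1) (idx3 o0 o1 o1)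
  + M (idx3 o0 o1 o1) (idx3 o1 o0 o0) * M (idx3 o1 o0 o0) (idx3 o0 o1 o1)
  + M (idx3 o0 o1 o1) (idx3 o1 o0 o1) * M (idx3 o1 o0 o1) (idx3 o0 o1 o1)
  + M (idx3 o0 o1 o1) (idx3 o1 o1 o0) * M (idx3 o1 o1 o0) (idx3 o0 o1 o1)
  + M (idx3 o0 o1 o1) (idx3 o1 o1 o1) * M (idx3 o1 o1 o1) (idx3 o0 o1 o1)
  + M (idx3 o1 o0 o0) (idx3 o0 o0 o0) * M (idx3 o0 o0 o0) (idx3 o1 o0 o0)
  + M (idx3 o1 o0 o0) (idx3 o0 o0 o1) * M (idx3 o0 o0 o1) (idx3 o1 o0 o0)
  + M (idx3 o1 o0 o0) (idx3 o0 o1 o0) * M (idx3 o0 o1 o0) (idx3 o1 o0 o0)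
  + M (idx3 o1 o0 o0) (idx3 o0 o1 o1) * M (idx3 o0 o1 o1) (idx3 o1 o0 o0)
  + M (idx3 o1 o0 o0) (idx3 o1 o0 o0) * M (idx3 o1 o0 o0) (idx3 o1 o0 o0)
  + M (idx3 o1 o0 o0) (idx3 o1 o0 o1) * M (idx3 o1 o0 o1) (idx3 o1 o0 o0)
  + M (idx3 o1 o0 o0) (idx3 o1 o1 o0) * M (idx3 o1 o1 o0) (idx3 o1 o0 o0)
  + M (idx3 o1 o0 o0) (idx3 o1 o1 o1) * M (idx3 o1 o1 o1) (idx3 o1 o0 o0)
  + M (idx3 o1 o0 o1) (idx3 o0 o0 o0) * M (idx3 o0 o0 o0) (idx3 o1 o0 o1)
  + M (idx3 o1 o0 o1) (idx3 o0 o0 o1) * M (idx3 o0 o0 o1) (idx3 o1 o0 o1)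
  + M (idx3 o1 o0 o1) (idx3 o0 o1 o0) * M (idx3 o0 o1 o0) (idx3 o1 o0 o1)
  + M (idx3 o1 o0 o1) (idx3 o0 o1 o1) * M (idx3 o0 o1 o1) (idx3 o1 o0 o1)
  + M (idx3 o1 o0 o1) (idx3 o1 o0 o0) * M (idx3 o1 o0 o0) (idx3 o1 o0 o1)
  + M (idx3 o1 o0 o1) (idx3 o1 o0 o1) * M (idx3 o1 o0 o1) (idx3 o1 o0 o1)
  + M (idx3 o1 o0 o1) (idx3 o1 o1 o0) * M (idx3 o1 o1 o0) (idx3 o1 o0 o1)
  + M (idx3 o1 o0 o1) (idx3 o1 o1 o1) * M (idx3 o1 o1 o1) (idx3 o1 o0 o1)
  + M (idx3 o1 o1 o0) (idx3 o0 o0 o0) * M (idx3 o0 o0 o0) (idx3 o1 o1 o0)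
  + M (idx3 o1 o1 o0) (idx3 o0 o0 o1) * M (idx3 o0 o0 o1) (idx3 o1 o1 o0)
  + M (idx3 o1 o1 o0) (idx3 o0 o1 o0) * M (idx3 o0 o1 o0) (idx3 o1 o1 o0)
  + M (idx3 o1 o1 o0) (idx3 o0 o1 o1) * M (idx3 o0 o1 o1) (idx3 o1 o1 o0)
  + M (idx3 o1 o1 o0) (idx3 o1 o0 o0) * M (idx3 o1 o0 o0) (idx3 o1 o1 o0)
  + M (idx3 o1 o1 o0) (idx3 o1 o0 o1) * M (idx3 o1 o0 o1) (idx3 o1 o1 o0)
  + M (idx3 o1 o1 o0) (idx3 o1 o1 o0) * M (idx3 o1 o1 o0) (idx3 o1 o1 o0)
  + M (idx3 o1 o1 o0) (idx3 o1 o1 o1) * M (idx3 o1 o1 o1) (idx3 o1 o1 o0)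
  + M (idx3 o1 o1 o1) (idx3 o0 o0 o0) * M (idx3 o0 o0 o0) (idx3 o1 o1 o1)
  + M (idx3 o1 o1 o1) (idx3 o0 o0 o1) * M (idx3 o0 o0 o1) (idx3 o1 o1 o1)
  + M (idx3 o1 o1 o1) (idx3 o0 o1 o0) * M (idx3 o0 o1 o0) (idx3 o1 o1 o1)
  + M (idx3 o1 o1 o1) (idx3 o0 o1 o1) * M (idx3 o0 o1 o1) (idx3 o1 o1 o1)
  + M (idx3 o1 o1 o1) (idx3 o1 o0 o0) * M (idx3 o1 o0 o0) (idx3 o1 o1 o1)
  + M (idx3 o1 o1 o1) (idx3 o1 o0 o1) * M (idx3 o1 o0 o1) (idx3 o1 o1 o1)
  + M (idx3 o1 o1 o1) (idx3 o1 o1 o0) * M (idx3 o1 o1 o0) (idx3 o1 o1 o1)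
  + M (idx3 o1 o1 o1) (idx3 o1 o1 o1) * M (idx3 o1 o1 o1) (idx3 o1 o1 o1).
Proof. rewrite trmulE sum8 !sum8. ring. Qed.

Lemma MJ_000 (M : 'M[C]_(2 * 2 * 2)) x : (M *m J3) x (idx3 o0 o0 o0) = M x (idx3 o1 o1 o1).
Proof. rewrite mxE sum8 !J3E ?A2_00 ?A2_01 ?A2_10 ?A2_11. ring. Qed.

Lemma MJ_001 (M : 'M[C]_(2 * 2 * 2)) x : (M *m J3) x (idx3 o0 o0 o1) = - M x (idx3 o1 o1 o0).
Proof. rewrite mxE sum8 !J3E ?A2_00 ?A2_01 ?A2_10 ?A2_11. ring. Qed.

Lemma MJ_010 (M : 'M[C]_(2 * 2 * 2)) x : (M *m J3) x (idx3 o0 o1 o0) = - M x (idx3 o1 o0 o1).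
Proof. rewrite mxE sum8 !J3E ?A2_00 ?A2_01 ?A2_10 ?A2_11. ring. Qed.

Lemma MJ_011 (M : 'M[C]_(2 * 2 * 2)) x : (M *m J3) x (idx3 o0 o1 o1) = M x (idx3 o1 o0 o0).
Proof. rewrite mxE sum8 !J3E ?A2_00 ?A2_01 ?A2_10 ?A2_11. ring. Qed.

Lemma MJ_100 (M : 'M[C]_(2 * 2 * 2)) x : (M *m J3) x (idx3 o1 o0 o0) = - M x (idx3 o0 o1 o1).
Proof. rewrite mxE sum8 !J3E ?A2_00 ?A2_01 ?A2_10 ?A2_11. ring. Qed.

Lemma MJ_101 (M : 'M[C]_(2 * 2 * 2)) x : (M *m J3) x (idx3 o1 o0 o1) = M x (idx3 o0 o1 o0).
Proof. rewrite mxE sum8 !J3E ?A2_00 ?A2_01 ?A2_10 ?A2_11. ring. Qed.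

Lemma MJ_110 (M : 'M[C]_(2 * 2 * 2)) x : (M *m J3) x (idx3 o1 o1 o0) = M x (idx3 o0 o0 o1).
Proof. rewrite mxE sum8 !J3E ?A2_00 ?A2_01 ?A2_10 ?A2_11. ring. Qed.

Lemma MJ_111 (M : 'M[C]_(2 * 2 * 2)) x : (M *m J3) x (idx3 o1 o1 o1) = - M x (idx3 o0 o0 o0).
Proof. rewrite mxE sum8 !J3E ?A2_00 ?A2_01 ?A2_10 ?A2_11. ring. Qed.

Lemma JM_000 (M : 'M[C]_(2 * 2 * 2)) y : (J3 *m M) (idx3 o0 o0 o0) y = - M (idx3 o1 o1 o1) y.
Proof. rewrite mxE sum8 !J3E ?A2_00 ?A2_01 ?A2_10 ?A2_11. ring. Qed.

Lemma JM_001 (M : 'M[C]_(2 * 2 * 2)) y : (J3 *m M) (idx3 o0 o0 o1) y = M (idx3 o1 o1 o0) y.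
Proof. rewrite mxE sum8 !J3E ?A2_00 ?A2_01 ?A2_10 ?A2_11. ring. Qed.

Lemma JM_010 (M : 'M[C]_(2 * 2 * 2)) y : (J3 *m M) (idx3 o0 o1 o0) y = M (idx3 o1 o0 o1) y.
Proof. rewrite mxE sum8 !J3E ?A2_00 ?A2_01 ?A2_10 ?A2_11. ring. Qed.

Lemma JM_011 (M : 'M[C]_(2 * 2 * 2)) y : (J3 *m M) (idx3 o0 o1 o1) y = - M (idx3 o1 o0 o0) y.
Proof. rewrite mxE sum8 !J3E ?A2_00 ?A2_01 ?A2_10 ?A2_11. ring. Qed.

Lemma JM_100 (M : 'M[C]_(2 * 2 * 2)) y : (J3 *m M) (idx3 o1 o0 o0) y = M (idx3 o0 o1 o1) y.
Proof. rewrite mxE sum8 !J3E ?A2_00 ?A2_01 ?A2_10 ?A2_11. ring. Qed.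

Lemma JM_101 (M : 'M[C]_(2 * 2 * 2)) y : (J3 *m M) (idx3 o1 o0 o1) y = - M (idx3 o0 o1 o0) y.
Proof. rewrite mxE sum8 !J3E ?A2_00 ?A2_01 ?A2_10 ?A2_11. ring. Qed.

Lemma JM_110 (M : 'M[C]_(2 * 2 * 2)) y : (J3 *m M) (idx3 o1 o1 o0) y = - M (idx3 o0 o0 o1) y.
Proof. rewrite mxE sum8 !J3E ?A2_00 ?A2_01 ?A2_10 ?A2_11. ring. Qed.

Lemma JM_111 (M : 'M[C]_(2 * 2 * 2)) y : (J3 *m M) (idx3 o1 o1 o1) y = M (idx3 o0 o0 o0) y.
Proof. rewrite mxE sum8 !J3E ?A2_00 ?A2_01 ?A2_10 ?A2_11. ring. Qed.

Lemma trJ (M : 'M[C]_(2 * 2 * 2)) : \tr (M *m J3 *m M^T *m J3^T) =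
  (- M (idx3 o0 o0 o0) (idx3 o1 o1 o1) * M (idx3 o1 o1 o1) (idx3 o0 o0 o0))
  + (M (idx3 o0 o0 o0) (idx3 o1 o1 o0) * M (idx3 o1 o1 o1) (idx3 o0 o0 o1))
  + (M (idx3 o0 o0 o0) (idx3 o1 o0 o1) * M (idx3 o1 o1 o1) (idx3 o0 o1 o0))
  + (- M (idx3 o0 o0 o0) (idx3 o1 o0 o0) * M (idx3 o1 o1 o1) (idx3 o0 o1 o1))
  + (M (idx3 o0 o0 o0) (idx3 o0 o1 o1) * M (idx3 o1 o1 o1) (idx3 o1 o0 o0))
  + (- M (idx3 o0 o0 o0) (idx3 o0 o1 o0) * M (idx3 o1 o1 o1) (idx3 o1 o0 o1))
  + (- M (idx3 o0 o0 o0) (idx3 o0 o0 o1) * M (idx3 o1 o1 o1) (idx3 o1 o1 o0))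
  + (M (idx3 o0 o0 o0) (idx3 o0 o0 o0) * M (idx3 o1 o1 o1) (idx3 o1 o1 o1))
  + (M (idx3 o0 o0 o1) (idx3 o1 o1 o1) * M (idx3 o1 o1 o0) (idx3 o0 o0 o0))
  + (- M (idx3 o0 o0 o1) (idx3 o1 o1 o0) * M (idx3 o1 o1 o0) (idx3 o0 o0 o1))
  + (- M (idx3 o0 o0 o1) (idx3 o1 o0 o1) * M (idx3 o1 o1 o0) (idx3 o0 o1 o0))
  + (M (idx3 o0 o0 o1) (idx3 o1 o0 o0) * M (idx3 o1 o1 o0) (idx3 o0 o1 o1))
  + (- M (idx3 o0 o0 o1) (idx3 o0 o1 o1) * M (idx3 o1 o1 o0) (idx3 o1 o0 o0))
  + (M (idx3 o0 o0 o1) (idx3 o0 o1 o0) * M (idx3 o1 o1 o0) (idx3 o1 o0 o1))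
  + (M (idx3 o0 o0 o1) (idx3 o0 o0 o1) * M (idx3 o1 o1 o0) (idx3 o1 o1 o0))
  + (- M (idx3 o0 o0 o1) (idx3 o0 o0 o0) * M (idx3 o1 o1 o0) (idx3 o1 o1 o1))
  + (M (idx3 o0 o1 o0) (idx3 o1 o1 o1) * M (idx3 o1 o0 o1) (idx3 o0 o0 o0))
  + (- M (idx3 o0 o1 o0) (idx3 o1 o1 o0) * M (idx3 o1 o0 o1) (idx3 o0 o0 o1))
  + (- M (idx3 o0 o1 o0) (idx3 o1 o0 o1) * M (idx3 o1 o0 o1) (idx3 o0 o1 o0))
  + (M (idx3 o0 o1 o0) (idx3 o1 o0 o0) * M (idx3 o1 o0 o1) (idx3 o0 o1 o1))
  + (- M (idx3 o0 o1 o0) (idx3 o0 o1 o1) * M (idx3 o1 o0 o1) (idx3 o1 o0 o0))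
  + (M (idx3 o0 o1 o0) (idx3 o0 o1 o0) * M (idx3 o1 o0 o1) (idx3 o1 o0 o1))
  + (M (idx3 o0 o1 o0) (idx3 o0 o0 o1) * M (idx3 o1 o0 o1) (idx3 o1 o1 o0))
  + (- M (idx3 o0 o1 o0) (idx3 o0 o0 o0) * M (idx3 o1 o0 o1) (idx3 o1 o1 o1))
  + (- M (idx3 o0 o1 o1) (idx3 o1 o1 o1) * M (idx3 o1 o0 o0) (idx3 o0 o0 o0))
  + (M (idx3 o0 o1 o1) (idx3 o1 o1 o0) * M (idx3 o1 o0 o0) (idx3 o0 o0 o1))
  + (M (idx3 o0 o1 o1) (idx3 o1 o0 o1) * M (idx3 o1 o0 o0) (idx3 o0 o1 o0))
  + (- M (idx3 o0 o1 o1) (idx3 o1 o0 o0) * M (idx3 o1 o0 o0) (idx3 o0 o1 o1))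
  + (M (idx3 o0 o1 o1) (idx3 o0 o1 o1) * M (idx3 o1 o0 o0) (idx3 o1 o0 o0))
  + (- M (idx3 o0 o1 o1) (idx3 o0 o1 o0) * M (idx3 o1 o0 o0) (idx3 o1 o0 o1))
  + (- M (idx3 o0 o1 o1) (idx3 o0 o0 o1) * M (idx3 o1 o0 o0) (idx3 o1 o1 o0))
  + (M (idx3 o0 o1 o1) (idx3 o0 o0 o0) * M (idx3 o1 o0 o0) (idx3 o1 o1 o1))
  + (M (idx3 o1 o0 o0) (idx3 o1 o1 o1) * M (idx3 o0 o1 o1) (idx3 o0 o0 o0))
  + (- M (idx3 o1 o0 o0) (idx3 o1 o1 o0) * M (idx3 o0 o1 o1) (idx3 o0 o0 o1))
  + (- M (idx3 o1 o0 o0) (idx3 o1 o0 o1) * M (idx3 o0 o1 o1) (idx3 o0 o1 o0))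
  + (M (idx3 o1 o0 o0) (idx3 o1 o0 o0) * M (idx3 o0 o1 o1) (idx3 o0 o1 o1))
  + (- M (idx3 o1 o0 o0) (idx3 o0 o1 o1) * M (idx3 o0 o1 o1) (idx3 o1 o0 o0))
  + (M (idx3 o1 o0 o0) (idx3 o0 o1 o0) * M (idx3 o0 o1 o1) (idx3 o1 o0 o1))
  + (M (idx3 o1 o0 o0) (idx3 o0 o0 o1) * M (idx3 o0 o1 o1) (idx3 o1 o1 o0))
  + (- M (idx3 o1 o0 o0) (idx3 o0 o0 o0) * M (idx3 o0 o1 o1) (idx3 o1 o1 o1))
  + (- M (idx3 o1 o0 o1) (idx3 o1 o1 o1) * M (idx3 o0 o1 o0) (idx3 o0 o0 o0))
  + (M (idx3 o1 o0 o1) (idx3 o1 o1 o0) * M (idx3 o0 o1 o0) (idx3 o0 o0 o1))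
  + (M (idx3 o1 o0 o1) (idx3 o1 o0 o1) * M (idx3 o0 o1 o0) (idx3 o0 o1 o0))
  + (- M (idx3 o1 o0 o1) (idx3 o1 o0 o0) * M (idx3 o0 o1 o0) (idx3 o0 o1 o1))
  + (M (idx3 o1 o0 o1) (idx3 o0 o1 o1) * M (idx3 o0 o1 o0) (idx3 o1 o0 o0))
  + (- M (idx3 o1 o0 o1) (idx3 o0 o1 o0) * M (idx3 o0 o1 o0) (idx3 o1 o0 o1))
  + (- M (idx3 o1 o0 o1) (idx3 o0 o0 o1) * M (idx3 o0 o1 o0) (idx3 o1 o1 o0))
  + (M (idx3 o1 o0 o1) (idx3 o0 o0 o0) * M (idx3 o0 o1 o0) (idx3 o1 o1 o1))
  + (- M (idx3 o1 o1 o0) (idx3 o1 o1 o1) * M (idx3 o0 o0 o1) (idx3 o0 o0 o0))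
  + (M (idx3 o1 o1 o0) (idx3 o1 o1 o0) * M (idx3 o0 o0 o1) (idx3 o0 o0 o1))
  + (M (idx3 o1 o1 o0) (idx3 o1 o0 o1) * M (idx3 o0 o0 o1) (idx3 o0 o1 o0))
  + (- M (idx3 o1 o1 o0) (idx3 o1 o0 o0) * M (idx3 o0 o0 o1) (idx3 o0 o1 o1))
  + (M (idx3 o1 o1 o0) (idx3 o0 o1 o1) * M (idx3 o0 o0 o1) (idx3 o1 o0 o0))
  + (- M (idx3 o1 o1 o0) (idx3 o0 o1 o0) * M (idx3 o0 o0 o1) (idx3 o1 o0 o1))
  + (- M (idx3 o1 o1 o0) (idx3 o0 o0 o1) * M (idx3 o0 o0 o1) (idx3 o1 o1 o0))
  + (M (idx3 o1 o1 o0) (idx3 o0 o0 o0) * M (idx3 o0 o0 o1) (idx3 o1 o1 o1))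
  + (M (idx3 o1 o1 o1) (idx3 o1 o1 o1) * M (idx3 o0 o0 o0) (idx3 o0 o0 o0))
  + (- M (idx3 o1 o1 o1) (idx3 o1 o1 o0) * M (idx3 o0 o0 o0) (idx3 o0 o0 o1))
  + (- M (idx3 o1 o1 o1) (idx3 o1 o0 o1) * M (idx3 o0 o0 o0) (idx3 o0 o1 o0))
  + (M (idx3 o1 o1 o1) (idx3 o1 o0 o0) * M (idx3 o0 o0 o0) (idx3 o0 o1 o1))
  + (- M (idx3 o1 o1 o1) (idx3 o0 o1 o1) * M (idx3 o0 o0 o0) (idx3 o1 o0 o0))
  + (M (idx3 o1 o1 o1) (idx3 o0 o1 o0) * M (idx3 o0 o0 o0) (idx3 o1 o0 o1))
  + (M (idx3 o1 o1 o1) (idx3 o0 o0 o1) * M (idx3 o0 o0 o0) (idx3 o1 o1 o0))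
  + (- M (idx3 o1 o1 o1) (idx3 o0 o0 o0) * M (idx3 o0 o0 o0) (idx3 o1 o1 o1)).
Proof. rewrite trJE2 sum8 !sum8 !MJ_000 !MJ_001 !MJ_010 !MJ_011 !MJ_100 !MJ_101 !MJ_110 !MJ_111 !JM_000 !JM_001 !JM_010 !JM_011 !JM_100 !JM_101 !JM_110 !JM_111. ring. Qed.

Lemma ident (rho : 'M[C]_(2 * 2 * 2)) :
  Sval (rhoAB rho) + Sval (rhoAC rho) + Sval (rhoBC rho) =
  - (\tr rho) ^+ 2 + 4 * \tr (rho *m rho) + 4 * \tr (rho *m J3 *m rho^T *m J3^T).
Proof.
rewrite trJ trsq trE8 sum8.
rewrite !SvalE /= !tcoef16.
rewrite !rhoAB_E !rhoAC_E !rhoBC_E.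
rewrite !s1_00 !s1_01 !s1_10 !s1_11 !s3_00 !s3_01 !s3_10 !s3_11 !A2_00 !A2_01 !A2_10 !A2_11.
ring.
Qed.

End Ident.

Section Sym.
Variable R : rcfType.
Local Notation C := (R[i]).

Lemma idxK m n (p : 'I_m * 'I_n) : mxtens_unindex (mxtens_index p) = p.
Proof. exact: mxtens_indexK. Qed.

Lemma qA3 (a b c : 'I_2) : qA (idx3 a b c) = a.
Proof. rewrite /qA /idx3 (idxK (idx2 a b, c)); change ((mxtens_unindex (idx2 a b)).1 = a); by rewrite /idx2 (idxK (a, b)). Qed.
Lemma qB3 (a b c : 'I_2) : qB (idx3 a b c) = b.
Proof. rewrite /qB /idx3 (idxK (idx2 a b, c)); change ((mxtens_unindex (idx2 a b)).2 = b); by rewrite /idx2 (idxK (a, b)). Qed.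
Lemma qC3 (a b c : 'I_2) : qC (idx3 a b c) = c.
Proof. by rewrite /qC /idx3 (idxK (idx2 a b, c)). Qed.

Lemma qbit0 x : qbit x 0 = qA x. Proof. by []. Qed.
Lemma qbit1 x : qbit x 1 = qB x. Proof. by []. Qed.
Lemma qbit2 x : qbit x 2 = qC x. Proof. by []. Qed.

Lemma perm12 (a b c : 'I_2) : perm_idx (tperm (1 : 'I_3) 2) (idx3 a c b) = idx3 a b c.
Proof.
rewrite /perm_idx tpermL tpermR tpermD //.
by rewrite qbit0 qbit1 qbit2 qA3 qB3 qC3.
Qed.

Lemma perm01 (a b c : 'I_2) : perm_idx (tperm (0 : 'I_3) 1) (idx3 b a c) = idx3 a b c.
Proof.
rewrite /perm_idx tpermL tpermR tpermD //.
by rewrite qbit0 qbit1 qbit2 qA3 qB3 qC3.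
Qed.

Lemma symAC (rho : 'M[C]_(2 * 2 * 2)) : symmetric3 rho -> rhoAC rho = rhoAB rho.
Proof.
move=> hs; apply/matrixP => i j; rewrite !mxE; apply: eq_bigr => b _.
by rewrite -(hs (tperm 1 2)) !perm12.
Qed.

Lemma symBC (rho : 'M[C]_(2 * 2 * 2)) : symmetric3 rho -> rhoBC rho = rhoAC rho.
Proof.
move=> hs; apply/matrixP => i j; rewrite !mxE; apply: eq_bigr => b _.
by rewrite -(hs (tperm 0 1)) !perm01.
Qed.

End Sym.

Section JFacts.
Variable R : rcfType.
Local Notation C := (R[i]).

Lemma I2cases (i : 'I_2) : i = o0 \/ i = o1.
Proof. by case: i => [[|[|//]]] Hi; [left|right]; apply: val_inj. Qed.

Lemma A2T : (A2 R)^T = - A2 R.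
Proof.
apply/matrixP => i j; case: (I2cases i) => ->; case: (I2cases j) => ->; rewrite !mxE /=.
all: ring.
Qed.

Lemma A2A2T : A2 R *m (A2 R)^T = 1%:M.
Proof.
rewrite A2T mulmxN.
apply/matrixP => i j; case: (I2cases i) => ->; case: (I2cases j) => ->; rewrite !mxE sum2 !mxE /=.
all: ring.
Qed.


Lemma tens11 m n : (1%:M : 'M[C]_m) *t (1%:M : 'M[C]_n) = 1%:M.
Proof.
apply/matrixP => i j.
case: (mxtens_indexP i) => i0 i1; case: (mxtens_indexP j) => j0 j1.
rewrite tensmxE !mxE (can_eq (@mxtens_indexK m n)) xpair_eqE.
by case: eqP => _; case: eqP => _; rewrite /= ?mulr1n ?mulr0n ?mul1r ?mul0r.
Qed.

Lemma tZl m n p q (c : C) (X : 'M[C]_(m, n)) (Y : 'M[C]_(p, q)) : (c *: X) *t Y = c *: (X *t Y).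
Proof. by apply/matrixP => i j; rewrite !mxE mulrA. Qed.
Lemma tZr m n p q (c : C) (X : 'M[C]_(m, n)) (Y : 'M[C]_(p, q)) : X *t (c *: Y) = c *: (X *t Y).
Proof. by apply/matrixP => i j; rewrite !mxE mulrCA. Qed.

Lemma J3T : (J3 R)^T = - J3 R.
Proof.
rewrite /J3 !trmx_tens A2T -scaleN1r !(tZl, tZr) !scalerA.
have -> : (-1 * -1 * -1 : C) = -1 by ring.
by rewrite scaleN1r.
Qed.

Lemma J3J3T : J3 R *m (J3 R)^T = 1%:M.
Proof. by rewrite /J3 !trmx_tens !tensmx_mul A2A2T !tens11. Qed.

Lemma A2real a b : (A2 R a b)^* = A2 R a b.
Proof.
case: (I2cases a) => ->; case: (I2cases b) => ->; rewrite !mxE /=.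
all: by rewrite ?conjC0 ?conjC1 ?conjCN1.
Qed.

Lemma J3real : map_mx Num.conj (J3 R) = J3 R.
Proof.
apply/matrixP => x y; rewrite mxE.
case: (mxtens_indexP x) => xy x3; case: (mxtens_indexP y) => yy y3.
case: (mxtens_indexP xy) => x1 x2; case: (mxtens_indexP yy) => y1 y2.
rewrite -!/(idx2 _ _) -!/(idx3 _ _ _) J3E !rmorphM /=.
by rewrite !A2real.
Qed.

End JFacts.

Theorem corollary1 (R : rcfType) (rho : 'M[R[i]]_(2 * 2 * 2)) :
  is_state rho -> symmetric3 rho ->
  [/\ Sval (rhoAB rho) <= 1, Sval (rhoAC rho) <= 1 & Sval (rhoBC rho) <= 1].
Proof.
case=> herm psd tr1 hs.
have hk := key herm psd (J3J3T R) (J3T R) (J3real R).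
have hi := ident rho.
rewrite (symBC hs) (symAC hs) in hi *.
set S := Sval (rhoAB rho) in hi *.
set a := \tr (rho *m rho) in hk hi.
set b := \tr (rho *m J3 R *m rho^T *m (J3 R)^T) in hk hi.
rewrite tr1 expr1n in hk hi.
have H3 : 3 * S <= 3 * 1.
  have -> : 3 * S = S + S + S by ring.
  rewrite hi -addrA -mulrDr.
  have -> : 3 * 1 = - 1 + 4 * 1 :> R[i] by ring.
  rewrite lerD2l; apply: ler_wpM2l => //.
by rewrite ler_pM2l // in H3; split.
Qed.
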